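(* Let $f : A \longrightarrow B$ be any derivation of the cut-free proof system for $\mathbf{NL}_{\diamond}$ described in the context (axioms, residuation rules and their inverses, monotonicity rules, and the rule-form extraction rules). Then the linear map $[\![ f ]\!] : [\![ A ]\!] \to [\![ B ]\!]$ obtained from the compact closed interpretation of $f$ coincides with the linear map $G(f) : [\![ A ]\!] \to [\![ B ]\!]$ given by the generalised Kronecker delta annotating $f$; i.e. $[\![ f ]\!] = G(f)$.
   Context: \textbf{Syntax.} Formulas of $\mathbf{NL}_{\diamond}$ are built from atoms by $A ::= p \mid \Diamond A \mid \Box A \mid A\otimes A \mid A/A \mid A\backslash A$. Derivations of arrows $A\longrightarrow B$ are built by the rules: axioms $1_A : A\longrightarrow A$; residuation: from $f:\Diamond A\to B$ infer $\triangledown f: A\to\Box B$; from $f:A\otimes B\to C$ infer $\rhd f : A\to C/B$ and $\lhd f: B\to A\backslash C$; and the inverses: from $g:A\to \Box B$ infer $\triangledown^{-1}g:\Diamond A\to B$; from $g:A\to C/B$ infer $\rhd^{-1}g: A\otimes B\to C$; from $g: B\to A\backslash C$ infer $\lhd^{-1}g : A\otimes B\to C$; monotonicity: from $f:A\to B$ infer $\Diamond f:\Diamond A\to\Diamond B$ and $\Box f:\Box A\to\Box B$; from $f:A\to B$, $g:C\to D$ infer $f\otimes g: A\otimes C\to B\otimes D$, $f/g : A/D\to B/C$, $f\backslash g: B\backslash C\to A\backslash D$; extraction rules: from $f:(\Diamond A\otimes B)\otimes C\to D$ infer $\widehat\alpha^l_\diamond f:\Diamond A\otimes(B\otimes C)\to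 D$; from $f: B\otimes(\Diamond A\otimes C)\to D$ infer $\widehat\sigma^l_\diamond f:\Diamond A\otimes(B\otimes C)\to D$; from $f: A\otimes(B\otimes\Diamond C)\to D$ infer $\widehat\alpha^r_\diamond f:(A\otimes B)\otimes\Diamond C\to D$; from $f:(A\otimes\Diamond C)\otimes B\to D$ infer $\widehat\sigma^r_\diamond f:(A\otimes B)\otimes\Diamond C\to D$. \textbf{Interpretation $[\![\cdot]\!]$.} Work in finite-dimensional real vector spaces with fixed bases, identifying $V^*$ with $V$; $\epsilon_V:V\otimes V\to\mathbb R$, $\sum v_{ij}e_i\otimes e_j\mapsto\sum_i v_{ii}$, and $\eta_V:\mathbb R\to V\otimes V$, $\lambda\mapsto\sum_i\lambda\, e_i\otimes e_i$; $\alpha$ and $\sigma$ denote the standard associativity and symmetry isomorphisms. Each atom is sent to a vector space; $[\![\Diamond A]\!]=[\![\Box A]\!]=[\![A]\!]$, $[\![A\otimes B]\!]=[\![A]\!]\otimes[\![B]\!]$, $[\![A/B]\!]=[\![A]\!]\otimes[\![B]\!]^*$, $[\![A\backslash B]\!]=[\![A]\!]^*\otimes[\![B]\!]$. On derivations: $[\![1_A]\!]=1_{[\![A]\!]}$; $[\![\triangledown f]\!]=[\![\triangledown^{-1}f]\!]=[\![\Diamond f]\!]=[\![\Box f]\!]=[\![f]\!]$; $[\![\rhd f]\!]=([\![f]\!]\otimes 1)\circ(1_{[\![A]\!]}\otimes\eta_{[\![B]\!]})$; $[\![\lhd f]\!]=(1\otimes[\![f]\!])\circ(\eta_{[\![A]\!]}\otimes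 1_{[\![B]\!]})$; $[\![\rhd^{-1}g]\!]=(1_{[\![C]\!]}\otimes\epsilon_{[\![B]\!]})\circ([\![g]\!]\otimes 1_{[\![B]\!]})$; $[\![\lhd^{-1}h]\!]=(\epsilon_{[\![A]\!]}\otimes 1_{[\![C]\!]})\circ(1_{[\![A]\!]}\otimes[\![h]\!])$; $[\![f\otimes g]\!]=[\![f]\!]\otimes[\![g]\!]$; $[\![f/g]\!]=(1_{[\![B]\!]\otimes[\![C]\!]}\otimes\epsilon_{[\![D]\!]})\circ(1_{[\![B]\!]\otimes[\![C]\!]}\otimes[\![g]\!]\otimes1_{[\![D]\!]})\circ([\![f]\!]\otimes\eta_{[\![C]\!]}\otimes 1_{[\![D]\!]})$; $[\![f\backslash g]\!]=(\epsilon_{[\![B]\!]}\otimes 1_{[\![A]\!]\otimes[\![D]\!]})\circ(1_{[\![B]\!]}\otimes[\![f]\!]\otimes 1_{[\![A]\!]\otimes[\![D]\!]})\circ(1_{[\![B]\!]}\otimes\eta_{[\![A]\!]}\otimes[\![g]\!])$; $[\![\widehat\alpha^{l}_\diamond f]\!]=[\![f]\!]\circ\alpha$, $[\![\widehat\sigma^l_\diamond f]\!]=[\![f]\!]\circ\alpha^{-1}\circ(\sigma\otimes 1)\circ\alpha$, and symmetrically for the rightward rules. \textbf{Generalised Kronecker deltas.} For index lists $I=(i_1,\dots,i_n)$, $J=(j_1,\dots,j_n)$, $\delta^I_J=1$ if $i_k=j_k$ for all $k$ and $0$ otherwise; $\delta^I_J\delta^K_L=\delta^{IK}_{JL}$ (concatenation).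 Einstein summation is used: repeated indices are summed. A delta $\delta^I_J : X_M\to Y_N$ with $I+J$ a permutation of $M+N$ denotes the linear map sending a tensor $x_M\in X$ to the tensor $y_N=\delta^I_J x_M\in Y$. \textbf{Annotation $G(f)$.} Each derivation is annotated by a delta, with each formula occurrence in its endsequent carrying an index list of length equal to the rank of its interpretation: an axiom $A_I\to A_J$ (fresh lists) is annotated $\delta^I_J$; the residuation rules, their inverses, the $\Diamond,\Box$ monotonicity rules and the four extraction rules keep the same delta, the index lists of subformula occurrences simply moving with those occurrences (e.g. from $\delta^I_J: A\otimes B\to C$ one gets $\delta^I_J: B\to A\otimes C$ for $\lhd$, with $A/B$ read as $A\otimes B$ and $A\backslash B$ as $A\otimes B$ at the level of spaces); for the binary monotonicity rules, from $\delta^I_J : A_I\to B_J$ and $\delta^K_L : C_K\to D_L$ one gets $\delta^{IK}_{JL}: A_I\otimes C_K\to B_J\otimes D_L$ for $\otimes$, $\delta^{IK}_{JL}: A_I\otimes D_L\to B_J\otimes C_K$ for $/$, and $\delta^{IK}_{JL}: B_J\otimes C_K\to A_I\otimes D_L$ for $\backslash$. $G(f)$ is the linear map $[\![A]\!]\to[\![B]\!]$ denoted by the resulting annotated delta. *)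

(* Defs.v *)
From mathcomp Require Import all_boot all_order all_algebra.
From mathcomp Require Import reals.
Import GRing.Theory Num.Theory.
Local Open Scope ring_scope.

Inductive fml (atom : Type) : Type :=
| Atom   : atom -> fml atom
| Dia    : fml atom -> fml atom
| Box    : fml atom -> fml atom
| Tens   : fml atom -> fml atom -> fml atom
| Slash  : fml atom -> fml atom -> fml atom   (* A / B *)
| Bslash : fml atom -> fml atom -> fml atom.  (* A \ B *)
Arguments Atom {atom}. Arguments Dia {atom}. Arguments Box {atom}.
Arguments Tens {atom}. Arguments Slash {atom}. Arguments Bslash {atom}.

Section Deriv.
Variable atom : Type.
Inductive nld : fml atom -> fml atom -> Type :=
| ax (A : fml atom) : nld A A
| dres (A B : fml atom) :
    nld (Dia A) B -> nld A (Box B)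
| rres (A B C : fml atom) :
    nld (Tens A B) C -> nld A (Slash C B)
| lres (A B C : fml atom) :
    nld (Tens A B) C -> nld B (Bslash A C)
| dres_inv (A B : fml atom) :
    nld A (Box B) -> nld (Dia A) B
| rres_inv (A B C : fml atom) :
    nld A (Slash C B) -> nld (Tens A B) C
| lres_inv (A B C : fml atom) :
    nld B (Bslash A C) -> nld (Tens A B) C
| mdia (A B : fml atom) : nld A B -> nld (Dia A) (Dia B)
| mbox (A B : fml atom) : nld A B -> nld (Box A) (Box B)
| mtens (A B C D : fml atom) :
    nld A B -> nld C D -> nld (Tens A C) (Tens B D)
| mslash (A B C D : fml atom) :
    nld A B -> nld C D -> nld (Slash A D) (Slash B C)
| mbslash (A B C D : fml atom) :
    nld A B -> nld C D -> nld (Bslash B C) (Bslash A D)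
| alpha_l (A B C D : fml atom) :
    nld (Tens (Tens (Dia A) B) C) D -> nld (Tens (Dia A) (Tens B C)) D
| sigma_l (A B C D : fml atom) :
    nld (Tens B (Tens (Dia A) C)) D -> nld (Tens (Dia A) (Tens B C)) D
| alpha_r (A B C D : fml atom) :
    nld (Tens A (Tens B (Dia C))) D -> nld (Tens (Tens A B) (Dia C)) D
| sigma_r (A B C D : fml atom) :
    nld (Tens (Tens A (Dia C)) B) D -> nld (Tens (Tens A B) (Dia C)) D.
End Deriv.
Arguments nld {atom}.
Arguments ax {atom}.
Arguments dres {atom}. Arguments rres {atom}. Arguments lres {atom}.
Arguments dres_inv {atom}. Arguments rres_inv {atom}. Arguments lres_inv {atom}.
Arguments mdia {atom}. Arguments mbox {atom}. Arguments mtens {atom}.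
Arguments mslash {atom}. Arguments mbslash {atom}.
Arguments alpha_l {atom}. Arguments sigma_l {atom}.
Arguments alpha_r {atom}. Arguments sigma_r {atom}.

(* Spaces.  Every [[A]] is a tensor product of the atom spaces (with   *)
(* V^* identified with V); with the fixed bases, [[A]] is R^(d1 x..x dk)*)
(* where sh d A = [d1;..;dk] lists the dimensions of the tensor        *)
(* factors.  A basis vector is a multi-index (seq nat) in indices s.   *)
Section Spaces.
Variable atom : Type.
Variable d : atom -> nat.

Fixpoint sh (A : fml atom) : seq nat :=
  match A with
  | Atom p => [:: d p]
  | Dia A | Box A => sh A
  | Tens A B | Slash A B | Bslash A B => sh A ++ sh B
  end.
End Spaces.
Arguments sh {atom}.

Fixpoint rk {atom} (A : fml atom) : nat :=
  match A with
  | Atom _ => 1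
  | Dia A | Box A => rk A
  | Tens A B | Slash A B | Bslash A B => rk A + rk B
  end.

Fixpoint indices (s : seq nat) : seq (seq nat) :=
  match s with
  | [::] => [:: [::]]
  | n :: s' => [seq i :: t | i <- iota 0 n, t <- indices s']
  end.

(* Linear maps between such spaces, as matrices in the fixed bases:    *)
(* M y x = coefficient of basis vector y (output) in M(basis vector x). *)
Section Maps.
Variable R : realType.
Definition mx := seq nat -> seq nat -> R.

(* identity; also the associativity isomorphisms mxalpha, mxalpha^-1,     *)
(* which are identities on the flattened bases                          *)
Definition idm : mx := fun y x => (y == x)%:R.
Definition mxalpha : mx := idm.
Definition mxalpha_inv : mx := idm.
(* composition g o f, s = shape of the intermediate space *)
Definition mxcomp (s : seq nat) (g f : mx) : mx :=
  fun z x => \sum_(y <- indices s) g z y * f y x.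
(* tensor f (x) g, nA = rank of the domain of f, nB = rank of codomain of f *)
Definition mxtens (nA nB : nat) (f g : mx) : mx :=
  fun y x => f (take nB y) (take nA x) * g (drop nB y) (drop nA x).
(* eta_V : R -> V (x) V and eps_V : V (x) V -> R, V of shape s *)
Definition eta (s : seq nat) : mx :=
  fun y x => (take (size s) y == drop (size s) y)%:R.
Definition eps (s : seq nat) : mx :=
  fun y x => (take (size s) x == drop (size s) x)%:R.
(* symmetry sigma : V (x) W -> W (x) V, nA = rank of V *)
Definition mxsym (nA : nat) : mx :=
  fun y x => (y == drop nA x ++ take nA x)%:R.

Definition mx_eq (sA sB : seq nat) (M N : mx) : Prop :=
  forall y x, y \in indices sB -> x \in indices sA -> M y x = N y x.
End Maps.
Arguments mxcomp {R}.
Arguments mxtens {R}.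
Arguments mx_eq {R}.

Fixpoint interp (R : realType) {atom} (d : atom -> nat)
    {X Y : fml atom} (f : nld X Y) : mx R :=
  let s := sh d in
  match f with
  | ax A => idm R
  | dres A B f => interp R d f
  | dres_inv A B f => interp R d f
  | mdia A B f => interp R d f
  | mbox A B f => interp R d f
  | rres A B C f =>     (* ([[f]] (x) 1_B) o (1_A (x) eta_B) *)
      mxcomp (s A ++ s B ++ s B)
        (mxtens (rk A + rk B) (rk C) (interp R d f) (idm R))
        (mxtens (rk A) (rk A) (idm R) (eta R (s B)))
  | lres A B C f =>     (* (1_A (x) [[f]]) o (eta_A (x) 1_B) *)
      mxcomp (s A ++ s A ++ s B)
        (mxtens (rk A) (rk A) (idm R) (interp R d f))
        (mxtens 0 (rk A + rk A) (eta R (s A)) (idm R))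
  | rres_inv A B C g => (* (1_C (x) eps_B) o ([[g]] (x) 1_B) *)
      mxcomp (s C ++ s B ++ s B)
        (mxtens (rk C) (rk C) (idm R) (eps R (s B)))
        (mxtens (rk A) (rk C + rk B) (interp R d g) (idm R))
  | lres_inv A B C h => (* (eps_A (x) 1_C) o (1_A (x) [[h]]) *)
      mxcomp (s A ++ s A ++ s C)
        (mxtens (rk A + rk A) 0 (eps R (s A)) (idm R))
        (mxtens (rk A) (rk A) (idm R) (interp R d h))
  | mtens A B C D f g => mxtens (rk A) (rk B) (interp R d f) (interp R d g)
  | mslash A B C D f g =>
      (* (1_{B(x)C} (x) eps_D) o (1_{B(x)C} (x) [[g]] (x) 1_D)
         o ([[f]] (x) eta_C (x) 1_D) *)
      mxcomp (s B ++ s C ++ s D ++ s D)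
        (mxtens (rk B + rk C) (rk B + rk C) (idm R) (eps R (s D)))
        (mxcomp (s B ++ s C ++ s C ++ s D)
           (mxtens (rk B + rk C) (rk B + rk C) (idm R)
              (mxtens (rk C) (rk D) (interp R d g) (idm R)))
           (mxtens (rk A) (rk B) (interp R d f)
              (mxtens 0 (rk C + rk C) (eta R (s C)) (idm R))))
  | mbslash A B C D f g =>
      (* (eps_B (x) 1_{A(x)D}) o (1_B (x) [[f]] (x) 1_{A(x)D})
         o (1_B (x) eta_A (x) [[g]]) *)
      mxcomp (s B ++ s B ++ s A ++ s D)
        (mxtens (rk B + rk B) 0 (eps R (s B)) (idm R))
        (mxcomp (s B ++ s A ++ s A ++ s D)
           (mxtens (rk B) (rk B) (idm R)
              (mxtens (rk A) (rk B) (interp R d f) (idm R)))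
           (mxtens (rk B) (rk B) (idm R)
              (mxtens 0 (rk A + rk A) (eta R (s A)) (interp R d g))))
  | alpha_l A B C D f =>
      mxcomp (s A ++ s B ++ s C) (interp R d f) (mxalpha R)
  | sigma_l A B C D f =>
      mxcomp (s B ++ s A ++ s C) (interp R d f)
        (mxcomp (s B ++ s A ++ s C) (mxalpha_inv R)
          (mxcomp (s A ++ s B ++ s C)
             (mxtens (rk A + rk B) (rk B + rk A) (mxsym R (rk A)) (idm R))
             (mxalpha R)))
  | alpha_r A B C D f =>
      mxcomp (s A ++ s B ++ s C) (interp R d f) (mxalpha_inv R)
  | sigma_r A B C D f =>
      mxcomp (s A ++ s C ++ s B) (interp R d f)
        (mxcomp (s A ++ s C ++ s B) (mxalpha R)
          (mxcomp (s A ++ s B ++ s C)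
             (mxtens (rk A) (rk A) (idm R) (mxsym R (rk B)))
             (mxalpha_inv R)))
  end.

(* Index variables are natural numbers; an annotated sequent           *)
(* A_M --> B_N with delta delta^X_Y is recorded as (M, N, X, Y), with   *)
(* nxt a counter providing fresh variables.                            *)
Record annotation := Ann {
  ann_src : seq nat;
  ann_tgt : seq nat;
  ann_up  : seq nat;
  ann_lo  : seq nat;
  ann_nxt : nat
}.

Fixpoint annot {atom} {X Y : fml atom} (f : nld X Y) (n : nat)
    : annotation :=
  match f with
  | ax A =>
      let I := iota n (rk A) in let J := iota (n + rk A) (rk A) in
      Ann I J I J (n + rk A + rk A)
  | dres A B f => annot f n
  | dres_inv A B f => annot f n
  | mdia A B f => annot f n
  | mbox A B f => annot f n
  | rres A B C f =>
      let a := annot f n in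
      Ann (take (rk A) (ann_src a)) (ann_tgt a ++ drop (rk A) (ann_src a))
          (ann_up a) (ann_lo a) (ann_nxt a)
  | lres A B C f =>
      let a := annot f n in
      Ann (drop (rk A) (ann_src a)) (take (rk A) (ann_src a) ++ ann_tgt a)
          (ann_up a) (ann_lo a) (ann_nxt a)
  | rres_inv A B C g =>
      let a := annot g n in
      Ann (ann_src a ++ drop (rk C) (ann_tgt a)) (take (rk C) (ann_tgt a))
          (ann_up a) (ann_lo a) (ann_nxt a)
  | lres_inv A B C h =>
      let a := annot h n in
      Ann (take (rk A) (ann_tgt a) ++ ann_src a) (drop (rk A) (ann_tgt a))
          (ann_up a) (ann_lo a) (ann_nxt a)
  | mtens A B C D f g =>
      let a := annot f n in let b := annot g (ann_nxt a) in
      Ann (ann_src a ++ ann_src b) (ann_tgt a ++ ann_tgt b)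
          (ann_up a ++ ann_up b) (ann_lo a ++ ann_lo b) (ann_nxt b)
  | mslash A B C D f g =>
      let a := annot f n in let b := annot g (ann_nxt a) in
      Ann (ann_src a ++ ann_tgt b) (ann_tgt a ++ ann_src b)
          (ann_up a ++ ann_up b) (ann_lo a ++ ann_lo b) (ann_nxt b)
  | mbslash A B C D f g =>
      let a := annot f n in let b := annot g (ann_nxt a) in
      Ann (ann_tgt a ++ ann_src b) (ann_src a ++ ann_tgt b)
          (ann_up a ++ ann_up b) (ann_lo a ++ ann_lo b) (ann_nxt b)
  | alpha_l A B C D f => annot f n  (* flattened lists unchanged *)
  | sigma_l A B C D f =>
      let a := annot f n in let M := ann_src a in
      Ann (take (rk A) (drop (rk B) M) ++ take (rk B) M ++ drop (rk B + rk A) M)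
          (ann_tgt a) (ann_up a) (ann_lo a) (ann_nxt a)
  | alpha_r A B C D f => annot f n
  | sigma_r A B C D f =>
      let a := annot f n in let M := ann_src a in
      Ann (take (rk A) M ++ drop (rk A + rk C) M ++ take (rk C) (drop (rk A) M))
          (ann_tgt a) (ann_up a) (ann_lo a) (ann_nxt a)
  end.

(* The linear map denoted by an annotated delta delta^X_Y : A_M --> B_N:
   x_M |-> y_N = delta^X_Y x_M.  Its matrix entry at (y, x) is the value of
   delta^X_Y when the variables of M take the values x and those of N the
   values y. *)
Definition delta_map (R : realType) (M N X Y : seq nat) : mx R :=
  fun y x =>
    let v k := nth 0%N (x ++ y) (index k (M ++ N)) in
    (map v X == map v Y)%:R.

Definition Gmap (R : realType) {atom} {A B : fml atom} (f : nld A B) : mx R :=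
  let a := annot f 0 in
  delta_map R (ann_src a) (ann_tgt a) (ann_up a) (ann_lo a).

(* Main.v *)
Require Import Defs.
From mathcomp Require Import reals.
From mathcomp Require Import all_boot all_order all_algebra.
From mathcomp Require Import ring zify.
Import GRing.Theory Num.Theory.
Set Implicit Arguments. Unset Strict Implicit. Unset Printing Implicit Defensive.

Lemma size_sh atom (d : atom -> nat) (A : fml atom) : size (sh d A) = rk A.
Proof. elim: A => //= *; rewrite size_cat; congruence. Qed.

Lemma mem_indices_cons n s y :
  (y \in indices (n :: s)) = if y is i :: t then (i < n) && (t \in indices s) else false.
Proof.
apply/allpairsP/idP.
  by case=> [[i t]] /= [Hi Ht ->]; rewrite Ht andbT; move: Hi; rewrite mem_iota.
case: y => // i t /andP[Hi Ht]; exists (i, t); split => //=.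
by rewrite mem_iota add0n.
Qed.

Lemma indices_size s y : y \in indices s -> size y = size s.
Proof.
elim: s y => [|n s IH] y; first by rewrite inE => /eqP ->.
by case: y => [|i t]; rewrite mem_indices_cons // => /andP[_ /IH] /= ->.
Qed.

Lemma mem_indices_cat s1 s2 i j : size i = size s1 ->
  (i ++ j \in indices (s1 ++ s2)) = (i \in indices s1) && (j \in indices s2).
Proof.
elim: s1 i => [|n s IH] [|k t] //= [] Hs.
by rewrite !mem_indices_cons IH // andbA.
Qed.

Lemma indices_catP s1 s2 y : y \in indices (s1 ++ s2) ->
  exists i j, [/\ y = i ++ j, i \in indices s1 & j \in indices s2].
Proof.
move=> Hy; exists (take (size s1) y), (drop (size s1) y).
have Hs : size (take (size s1) y) = size s1.
  by rewrite size_take (indices_size Hy) size_cat; case: ltngtP => //; lia.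
move: Hy; rewrite -{1}(cat_take_drop (size s1) y) mem_indices_cat // => /andP[H1 H2].
by split => //; rewrite cat_take_drop.
Qed.

Lemma indices_uniq s : uniq (indices s).
Proof.
elim: s => [|n s IH] //=; apply: allpairs_uniq => //; first exact: iota_uniq.
by move=> [a b] [c e] _ _ /= [-> ->].
Qed.

Local Open Scope ring_scope.
Lemma sum_cat (R : realType) s1 s2 (F : seq nat -> R) :
  \sum_(y <- indices (s1 ++ s2)) F y =
  \sum_(i <- indices s1) \sum_(j <- indices s2) F (i ++ j).
Proof.
elim: s1 F => [|n s IH] F /=; first by rewrite big_seq1.
rewrite !big_allpairs_dep /=; apply: eq_bigr => i _; rewrite IH.
by apply: eq_bigr.
Qed.

Lemma sum_single (R : realType) s c (F : seq nat -> R) : c \in indices s ->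
  (forall y, y \in indices s -> y != c -> F y = 0) ->
  \sum_(y <- indices s) F y = F c.
Proof.
move=> Hc H; rewrite (bigD1_seq c) //= ?indices_uniq //.
rewrite big_seq_cond big1 ?addr0 // => y /andP[Hy Hne]; exact: H.
Qed.

Close Scope ring_scope.
Definition dval (K V : seq nat) k := nth 0%N V (index k K).

Lemma dval_catl K1 V1 K2 V2 k : size K1 = size V1 -> k \in K1 ->
  dval (K1 ++ K2) (V1 ++ V2) k = dval K1 V1 k.
Proof.
by move=> Hs Hk; rewrite /dval index_cat Hk nth_cat -Hs index_mem Hk.
Qed.

Lemma dval_catr K1 V1 K2 V2 k : size K1 = size V1 -> k \notin K1 ->
  dval (K1 ++ K2) (V1 ++ V2) k = dval K2 V2 k.
Proof.
move=> Hs Hk; rewrite /dval index_cat (negbTE Hk) nth_cat -Hs ltnNge leq_addr /=.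
by rewrite addKn.
Qed.

Lemma dval_perm K V K' V' : size K = size V -> size K' = size V' -> uniq K ->
  perm_eq (zip K V) (zip K' V') -> dval K V =1 dval K' V'.
Proof.
move=> Hs Hs' HU Hp k.
have HK : perm_eq K K'.
  have := perm_map fst Hp.
  have -> : [seq x.1 | x <- zip K V] = K by apply: unzip1_zip; rewrite Hs.
  by have -> : [seq x.1 | x <- zip K' V'] = K' by apply: unzip1_zip; rewrite Hs'.
have HU' : uniq K' by rewrite -(perm_uniq HK).
case Hk: (k \in K); last first.
  have Hk' : k \notin K' by rewrite -(perm_mem HK) Hk.
  rewrite /dval !nth_default //.
    by rewrite memNindex // Hs'.
  by rewrite memNindex ?Hk // Hs.
have Hin : (k, dval K V k) \in zip K V.
  have Hi : index k K < size (zip K V) by rewrite size_zip Hs minnn -Hs index_mem.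
  have := mem_nth (0%N, 0%N) Hi; rewrite nth_zip // nth_index //.
rewrite (perm_mem Hp) in Hin.
case/(nthP (0%N,0%N)): Hin => i; rewrite size_zip Hs' minnn nth_zip // => Hi [E1 E2].
rewrite -E2 /dval -E1 index_uniq ?Hs' //.
Qed.

Close Scope ring_scope.

Inductive ainv (a : annotation) (n rX rY : nat) : Prop := AInv :
 size (ann_src a) = rX -> size (ann_tgt a) = rY -> size (ann_up a) = size (ann_lo a) ->
  perm_eq (ann_src a ++ ann_tgt a) (ann_up a ++ ann_lo a) ->
  uniq (ann_src a ++ ann_tgt a) -> n <= ann_nxt a ->
  all (fun k => n <= k < ann_nxt a) (ann_src a ++ ann_tgt a) -> ainv a n rX rY.

Lemma seq_split (T : Type) (s : seq T) m n : size s = m + n ->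
  exists s1 s2, [/\ s = s1 ++ s2, size s1 = m & size s2 = n].
Proof.
move=> Hs; exists (take m s), (drop m s); rewrite cat_take_drop size_take size_drop Hs.
split => //; last by rewrite addKn.
by case: ltngtP => //; lia.
Qed.

Lemma ainv_perm s t u l m n rX rY s' t' rX' rY' :
  ainv (Ann s t u l m) n rX rY -> perm_eq (s' ++ t') (s ++ t) ->
  size s' = rX' -> size t' = rY' -> ainv (Ann s' t' u l m) n rX' rY'.
Proof.
case=> /= _ _ Hul Hp Hu Hn Ha Hp' Hs Ht; split => //=.
- exact: perm_trans Hp' Hp.
- by rewrite (perm_uniq Hp').
- by rewrite (perm_all _ Hp').
Qed.

Lemma ainv_bin s t u l m s2 t2 u2 l2 m2 n rX rY rX2 rY2 s' t' rX' rY' :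
  ainv (Ann s t u l m) n rX rY -> ainv (Ann s2 t2 u2 l2 m2) m rX2 rY2 ->
  perm_eq (s' ++ t') ((s ++ t) ++ (s2 ++ t2)) ->
  size s' = rX' -> size t' = rY' ->
  ainv (Ann s' t' (u ++ u2) (l ++ l2) m2) n rX' rY'.
Proof.
case=> /= _ _ Hul Hp Hu Hn Ha [/= _ _ Hul2 Hp2 Hu2 Hn2 Ha2] Hp' Hs Ht; split => //=.
- by rewrite !size_cat Hul Hul2.
- apply: perm_trans Hp' _; apply/permP => x; move/permP: Hp => /(_ x).
  move/permP: Hp2 => /(_ x); rewrite !count_cat; lia.
- rewrite (perm_uniq Hp') cat_uniq Hu Hu2 /= andbT.
  apply/hasPn => x /= Hx; apply/negP => Hx2.
  move/allP: Ha => /(_ x Hx2) /andP[_]; move/allP: Ha2 => /(_ x Hx) /andP[].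
  lia.
- lia.
- rewrite (perm_all _ Hp') all_cat.
  apply/andP; split; apply/allP => x Hx.
    by move/allP: Ha => /(_ x Hx) /andP[]; lia.
  by move/allP: Ha2 => /(_ x Hx) /andP[]; lia.
Qed.

Ltac rlia := repeat match goal with
  | |- context [@size (Equality.sort ?T) ?x] => change (@size (Equality.sort T) x) with (@size nat x)
  | H : context [@size (Equality.sort ?T) ?x] |- _ => change (@size (Equality.sort T) x) with (@size nat x) in H
  end; lia.
Ltac rlia_old := repeat match goal with
  | |- context [@rk ?a ?X] => let r := fresh "r" in set (r := @rk a X) in *; clearbody r
  | H : context [@rk ?a ?X] |- _ => let r := fresh "r" in set (r := @rk a X) in *; clearbody r
  end; lia.
Ltac perm_tac := apply/permP => ?; rewrite !count_cat; lia.

Lemma annot_inv atom (X Y : fml atom) (f : nld X Y) n :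
  ainv (annot f n) n (rk X) (rk Y).
Proof.
elim: f n => /=
  [A|A B f IH|A B C f IH|A B C f IH|A B f IH|A B C f IH|A B C f IH
  |A B f IH|A B f IH|A B C D f IH g IH2|A B C D f IH g IH2|A B C D f IH g IH2
  |A B C D f IH|A B C D f IH|A B C D f IH|A B C D f IH] n.
- split; rewrite /= ?size_iota //.
  + by rewrite -iotaD iota_uniq.
  + rlia.
  + by apply/allP => x; rewrite mem_cat !mem_iota => /orP[]; rlia.
- exact: IH.
- move: (IH n); case: (annot f n) => s t u l m H.
  case: (H) => /= Hs Ht _ _ _ _ _; case: (seq_split Hs) => [P [Q [Es HP HQ]]]; subst.
  apply: (ainv_perm H); rewrite ?take_size_cat ?drop_size_cat ?size_cat //; try rlia.
  perm_tac.
- move: (IH n); case: (annot f n) => s t u l m H.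
  case: (H) => /= Hs Ht _ _ _ _ _; case: (seq_split Hs) => [P [Q [Es HP HQ]]]; subst.
  apply: (ainv_perm H); rewrite ?take_size_cat ?drop_size_cat ?size_cat //; try rlia.
  perm_tac.
- exact: IH.
- move: (IH n); case: (annot f n) => s t u l m H.
  case: (H) => /= Hs Ht _ _ _ _ _; case: (seq_split Ht) => [P [Q [Es HP HQ]]]; subst.
  apply: (ainv_perm H); rewrite ?take_size_cat ?drop_size_cat ?size_cat //; try rlia.
  perm_tac.
- move: (IH n); case: (annot f n) => s t u l m H.
  case: (H) => /= Hs Ht _ _ _ _ _; case: (seq_split Ht) => [P [Q [Es HP HQ]]]; subst.
  apply: (ainv_perm H); rewrite ?take_size_cat ?drop_size_cat ?size_cat //; try rlia.
  perm_tac.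
- exact: IH.
- exact: IH.
- move: (IH n); case: (annot f n) => s t u l m H.
  move: (IH2 m); case: (annot g m) => s2 t2 u2 l2 m2 H2.
  case: (H) => /= Hs Ht _ _ _ _ _; case: (H2) => /= Hs2 Ht2 _ _ _ _ _.
  apply: (ainv_bin H H2); rewrite ?size_cat //; try rlia; perm_tac.
- move: (IH n); case: (annot f n) => s t u l m H.
  move: (IH2 m); case: (annot g m) => s2 t2 u2 l2 m2 H2.
  case: (H) => /= Hs Ht _ _ _ _ _; case: (H2) => /= Hs2 Ht2 _ _ _ _ _.
  apply: (ainv_bin H H2); rewrite ?size_cat //; try rlia; perm_tac.
- move: (IH n); case: (annot f n) => s t u l m H.
  move: (IH2 m); case: (annot g m) => s2 t2 u2 l2 m2 H2.
  case: (H) => /= Hs Ht _ _ _ _ _; case: (H2) => /= Hs2 Ht2 _ _ _ _ _.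
  apply: (ainv_bin H H2); rewrite ?size_cat //; try rlia; perm_tac.
- by move: (IH n); rewrite addnA.
- move: (IH n); case: (annot f n) => s t u l m H.
  case: (H) => /= Hs Ht _ _ _ _ _.
  case: (seq_split Hs) => [Mb [Q [Es HP HQ]]]; subst.
  case: (seq_split HQ) => [Ma [Mc [Es Ha Hc]]]; subst.
  have E : drop (rk B + rk A) (Mb ++ Ma ++ Mc) = Mc.
    by rewrite catA drop_size_cat // size_cat HP Ha.
  rewrite E (@drop_size_cat _ _ _ _ HP) (@take_size_cat _ _ _ _ Ha) (@take_size_cat _ _ _ _ HP).
  apply: (ainv_perm H) => //; rewrite ?size_cat //; try rlia; perm_tac.
- by move: (IH n); rewrite addnA.
- move: (IH n); case: (annot f n) => s t u l m H.
  case: (H) => /= Hs Ht _ _ _ _ _.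
  case: (seq_split Hs) => [P [Mb [Es HP HQ]]]; subst.
  case: (seq_split HP) => [Ma [Mc [Es Ha Hc]]]; subst.
  rewrite -catA in H *.
  have E : drop (rk A + rk C) (Ma ++ Mc ++ Mb) = Mb.
    by rewrite catA drop_size_cat // size_cat Ha Hc.
  rewrite E (@take_size_cat _ _ _ _ Ha) (@drop_size_cat _ _ _ _ Ha) (@take_size_cat _ _ _ _ Hc).
  apply: (ainv_perm H) => //; rewrite ?size_cat //; try rlia; perm_tac.
Qed.

Local Open Scope ring_scope.

Section Eval.
Variable R : realType.
Local Notation I := indices.
Local Notation idm := (idm R).

Lemma idmC a b : idm a b = idm b a.
Proof. by rewrite /idm eq_sym. Qed.

Lemma idm_cat a b c e : size a = size c -> idm (a ++ b) (c ++ e) = idm a c * idm b e.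
Proof. by move=> H; rewrite /Defs.idm eqseq_cat // -natrM mulnb. Qed.

Lemma tk (a b : seq nat) n : size a = n -> take n (a ++ b) = a.
Proof. exact: take_size_cat. Qed.
Lemma dr (a b : seq nat) n : size a = n -> drop n (a ++ b) = b.
Proof. exact: drop_size_cat. Qed.
Lemma tk3 (a b c : seq nat) n : (size a + size b)%N = n -> take n (a ++ b ++ c) = a ++ b.
Proof. by move=> H; rewrite catA tk // size_cat. Qed.
Lemma dr3 (a b c : seq nat) n : (size a + size b)%N = n -> drop n (a ++ b ++ c) = c.
Proof. by move=> H; rewrite catA dr // size_cat. Qed.
Lemma tkf (a : seq nat) n : size a = n -> take n a = a.
Proof. by move=> <-; rewrite take_size. Qed.
Lemma drf (a : seq nat) n : size a = n -> drop n a = [::].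
Proof. by move=> <-; rewrite drop_size. Qed.

Lemma eta_cat s a b x : size a = size s -> eta R s (a ++ b) x = idm a b.
Proof. by move=> H; rewrite /eta tk // dr. Qed.
Lemma eps_cat s a b y : size a = size s -> eps R s y (a ++ b) = idm a b.
Proof. by move=> H; rewrite /eps tk // dr. Qed.
Lemma sym_cat n a b y : size a = n -> mxsym R n y (a ++ b) = idm y (b ++ a).
Proof. by move=> H; rewrite /mxsym tk // dr. Qed.

Lemma sum_cat3 s1 s2 s3 (F : seq nat -> R) :
  \sum_(y <- I (s1 ++ s2 ++ s3)) F y =
  \sum_(i <- I s1) \sum_(j <- I s2) \sum_(k <- I s3) F (i ++ j ++ k).
Proof. by rewrite sum_cat; apply: eq_bigr => i _; rewrite sum_cat. Qed.

Lemma sum_cat4 s1 s2 s3 s4 (F : seq nat -> R) :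
  \sum_(y <- I (s1 ++ s2 ++ s3 ++ s4)) F y =
  \sum_(i <- I s1) \sum_(j <- I s2) \sum_(k <- I s3) \sum_(l <- I s4) F (i ++ j ++ k ++ l).
Proof.
by rewrite sum_cat; apply: eq_bigr => i _; rewrite sum_cat3.
Qed.

Lemma sum_idmR s c (G : seq nat -> R) : c \in I s ->
  \sum_(y <- I s) idm y c * G y = G c.
Proof.
move=> Hc; rewrite (sum_single Hc) ?/Defs.idm ?eqxx ?mul1r // => y _ Hne.
by rewrite (negbTE Hne) mul0r.
Qed.

Lemma sum_idmL s c (G : seq nat -> R) : c \in I s ->
  \sum_(y <- I s) idm c y * G y = G c.
Proof.
by move=> Hc; rewrite -(sum_idmR G Hc); apply: eq_bigr => y _; rewrite idmC.
Qed.

Lemma comp_idm_r s (G : mx R) z x : x \in I s -> mxcomp s G idm z x = G z x.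
Proof.
by move=> Hx; rewrite /mxcomp -(sum_idmR (G z) Hx); apply: eq_bigr => y _; rewrite mulrC.
Qed.

Lemma comp_idm_l s (G : mx R) z x : z \in I s -> mxcomp s idm G z x = G z x.
Proof. by move=> Hz; rewrite /mxcomp (sum_idmL (G^~ x) Hz). Qed.

Lemma mxtens_cat nA nB (F G : mx R) y1 y2 x1 x2 : size y1 = nB -> size x1 = nA ->
  mxtens nA nB F G (y1 ++ y2) (x1 ++ x2) = F y1 x1 * G y2 x2.
Proof. by move=> H1 H2; rewrite /mxtens !tk // !dr. Qed.

Ltac sz := repeat match goal with H : is_true (_ \in I _) |- _ =>
   move: (indices_size H) => ?; clear H end.

Lemma rres_eval sA sB sC (F : mx R) a b c :
  a \in I sA -> b \in I sB -> c \in I sC ->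
  mxcomp (sA ++ sB ++ sB) (mxtens (size sA + size sB) (size sC) F idm)
    (mxtens (size sA) (size sA) idm (eta R sB)) (c ++ b) a = F c (a ++ b).
Proof.
move=> Ha Hb Hc; rewrite /mxcomp sum_cat3.
have E : forall i j, i \in I sA -> j \in I sB -> {in I sB, forall k,
   mxtens (size sA + size sB) (size sC) F idm (c ++ b) (i ++ j ++ k) *
   mxtens (size sA) (size sA) idm (eta R sB) (i ++ j ++ k) a =
   idm k b * (idm j k * (idm i a * F c (i ++ j)))}.
  move=> i j Hi Hj k Hk.
  have Si := indices_size Hi; have Sj := indices_size Hj; have Sc := indices_size Hc.
  have Sa := indices_size Ha; have Sk := indices_size Hk.
  rewrite /mxtens tk // dr // tk3 ?Si ?Sj // dr3 ?Si ?Sj // tk // dr //.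
  rewrite tkf // drf // eta_cat // idmC; ring.
transitivity (\sum_(i <- I sA) \sum_(j <- I sB) idm j b * (idm i a * F c (i ++ j))).
  apply: eq_big_seq => i Hi; apply: eq_big_seq => j Hj.
  by rewrite (eq_big_seq _ (E i j Hi Hj)) sum_idmR.
transitivity (\sum_(i <- I sA) idm i a * F c (i ++ b)).
  by apply: eq_big_seq => i Hi; rewrite sum_idmR.
by rewrite sum_idmR.
Qed.

Lemma lres_eval sA sB sC (F : mx R) a b c :
  a \in I sA -> b \in I sB -> c \in I sC ->
  mxcomp (sA ++ sA ++ sB) (mxtens (size sA) (size sA) idm F)
    (mxtens 0 (size sA + size sA) (eta R sA) idm) (a ++ c) b = F c (a ++ b).
Proof.
move=> Ha Hb Hc; rewrite /mxcomp sum_cat3.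
have E : forall i j, i \in I sA -> j \in I sA -> {in I sB, forall k,
   mxtens (size sA) (size sA) idm F (a ++ c) (i ++ j ++ k) *
   mxtens 0 (size sA + size sA) (eta R sA) idm (i ++ j ++ k) b =
   idm k b * (idm j i * (idm i a * F c (j ++ k)))}.
  move=> i j Hi Hj k Hk.
  have Si := indices_size Hi; have Sj := indices_size Hj; have Sc := indices_size Hc.
  have Sa := indices_size Ha; have Sk := indices_size Hk.
  rewrite /mxtens (tk _ Sa) (dr _ Sa) (tk _ Si) (dr _ Si).
  rewrite (tk3 _ (_ : (size i + size j)%N = _)) ?Si ?Sj //.
  rewrite (dr3 _ (_ : (size i + size j)%N = _)) ?Si ?Sj //.
  rewrite take0 drop0 eta_cat // (idmC a i) (idmC i j); ring.
transitivity (\sum_(i <- I sA) \sum_(j <- I sA) idm j i * (idm i a * F c (j ++ b))).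
  apply: eq_big_seq => i Hi; apply: eq_big_seq => j Hj.
  by rewrite (eq_big_seq _ (E i j Hi Hj)) sum_idmR.
transitivity (\sum_(i <- I sA) idm i a * F c (i ++ b)).
  by apply: eq_big_seq => i Hi; rewrite sum_idmR.
by rewrite sum_idmR.
Qed.

Lemma rres_inv_eval sA sB sC (G : mx R) a b c :
  a \in I sA -> b \in I sB -> c \in I sC ->
  mxcomp (sC ++ sB ++ sB) (mxtens (size sC) (size sC) idm (eps R sB))
    (mxtens (size sA) (size sC + size sB) G idm) c (a ++ b) = G (c ++ b) a.
Proof.
move=> Ha Hb Hc; rewrite /mxcomp sum_cat3.
have E : forall i j, i \in I sC -> j \in I sB -> {in I sB, forall k,
   mxtens (size sC) (size sC) idm (eps R sB) c (i ++ j ++ k) *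
   mxtens (size sA) (size sC + size sB) G idm (i ++ j ++ k) (a ++ b) =
   idm k b * (idm j k * (idm i c * G (i ++ j) a))}.
  move=> i j Hi Hj k Hk.
  have Si := indices_size Hi; have Sj := indices_size Hj; have Sc := indices_size Hc.
  have Sa := indices_size Ha; have Sk := indices_size Hk.
  rewrite /mxtens (tkf Sc) (drf Sc) (tk _ Si) (dr _ Si).
  rewrite (tk3 _ (_ : (size i + size j)%N = _)) ?Si ?Sj //.
  rewrite (dr3 _ (_ : (size i + size j)%N = _)) ?Si ?Sj //.
  rewrite (tk _ Sa) (dr _ Sa) eps_cat // (idmC c i); ring.
transitivity (\sum_(i <- I sC) \sum_(j <- I sB) idm j b * (idm i c * G (i ++ j) a)).
  apply: eq_big_seq => i Hi; apply: eq_big_seq => j Hj.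
  by rewrite (eq_big_seq _ (E i j Hi Hj)) sum_idmR.
transitivity (\sum_(i <- I sC) idm i c * G (i ++ b) a).
  by apply: eq_big_seq => i Hi; rewrite sum_idmR.
by rewrite sum_idmR.
Qed.

Lemma lres_inv_eval sA sB sC (H : mx R) a b c :
  a \in I sA -> b \in I sB -> c \in I sC ->
  mxcomp (sA ++ sA ++ sC) (mxtens (size sA + size sA) 0 (eps R sA) idm)
    (mxtens (size sA) (size sA) idm H) c (a ++ b) = H (a ++ c) b.
Proof.
move=> Ha Hb Hc; rewrite /mxcomp sum_cat3.
have E : forall i j, i \in I sA -> j \in I sA -> {in I sC, forall k,
   mxtens (size sA + size sA) 0 (eps R sA) idm c (i ++ j ++ k) *
   mxtens (size sA) (size sA) idm H (i ++ j ++ k) (a ++ b) =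
   idm k c * (idm j i * (idm i a * H (j ++ k) b))}.
  move=> i j Hi Hj k Hk.
  have Si := indices_size Hi; have Sj := indices_size Hj; have Sc := indices_size Hc.
  have Sa := indices_size Ha; have Sk := indices_size Hk.
  rewrite /mxtens take0 drop0.
  rewrite (tk3 _ (_ : (size i + size j)%N = _)) ?Si ?Sj //.
  rewrite (dr3 _ (_ : (size i + size j)%N = _)) ?Si ?Sj //.
  rewrite (tk _ Si) (dr _ Si) (tk _ Sa) (dr _ Sa) eps_cat // (idmC c k) (idmC i j); ring.
transitivity (\sum_(i <- I sA) \sum_(j <- I sA) idm j i * (idm i a * H (j ++ c) b)).
  apply: eq_big_seq => i Hi; apply: eq_big_seq => j Hj.
  by rewrite (eq_big_seq _ (E i j Hi Hj)) sum_idmR.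
transitivity (\sum_(i <- I sA) idm i a * H (i ++ c) b).
  by apply: eq_big_seq => i Hi; rewrite sum_idmR.
by rewrite sum_idmR.
Qed.

Lemma sigma_l_eval sA sB sC (F : mx R) z a b c :
  a \in I sA -> b \in I sB -> c \in I sC ->
  mxcomp (sB ++ sA ++ sC) F (mxcomp (sB ++ sA ++ sC) (mxalpha_inv R)
    (mxcomp (sA ++ sB ++ sC)
       (mxtens (size sA + size sB) (size sB + size sA) (mxsym R (size sA)) idm)
       (mxalpha R))) z (a ++ b ++ c) = F z (b ++ a ++ c).
Proof.
move=> Ha Hb Hc.
have Sa := indices_size Ha; have Sb := indices_size Hb; have Sc := indices_size Hc.
have Hx : a ++ b ++ c \in I (sA ++ sB ++ sC) by rewrite !mem_indices_cat ?Ha ?Hb.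
rewrite {1}/mxcomp.
transitivity (\sum_(w <- I (sB ++ sA ++ sC)) F z w *
   mxtens (size sA + size sB) (size sB + size sA) (mxsym R (size sA)) idm w (a ++ b ++ c)).
  by apply: eq_big_seq => w Hw; rewrite comp_idm_l // comp_idm_r.
rewrite sum_cat3.
have E : forall i j, i \in I sB -> j \in I sA -> {in I sC, forall k,
   F z (i ++ j ++ k) *
   mxtens (size sA + size sB) (size sB + size sA) (mxsym R (size sA)) idm
     (i ++ j ++ k) (a ++ b ++ c) =
   idm k c * (idm j a * (idm i b * F z (i ++ j ++ k)))}.
  move=> i j Hi Hj k Hk.
  have Si := indices_size Hi; have Sj := indices_size Hj; have Sk := indices_size Hk.
  rewrite /mxtens (tk3 _ (_ : (size i + size j)%N = _)) ?Si ?Sj //.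
  rewrite (dr3 _ (_ : (size i + size j)%N = _)) ?Si ?Sj //.
  rewrite (tk3 _ (_ : (size a + size b)%N = _)) ?Sa ?Sb //.
  rewrite (dr3 _ (_ : (size a + size b)%N = _)) ?Sa ?Sb //.
  rewrite sym_cat // idm_cat ?Si ?Sb //; ring.
transitivity (\sum_(i <- I sB) \sum_(j <- I sA) idm j a * (idm i b * F z (i ++ j ++ c))).
  apply: eq_big_seq => i Hi; apply: eq_big_seq => j Hj.
  by rewrite (eq_big_seq _ (E i j Hi Hj)) sum_idmR.
transitivity (\sum_(i <- I sB) idm i b * F z (i ++ a ++ c)).
  by apply: eq_big_seq => i Hi; rewrite sum_idmR.
by rewrite sum_idmR.
Qed.

Lemma sigma_r_eval sA sB sC (F : mx R) z a b c :
  a \in I sA -> b \in I sB -> c \in I sC ->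
  mxcomp (sA ++ sC ++ sB) F (mxcomp (sA ++ sC ++ sB) (mxalpha R)
    (mxcomp (sA ++ sB ++ sC)
       (mxtens (size sA) (size sA) idm (mxsym R (size sB)))
       (mxalpha_inv R))) z (a ++ b ++ c) = F z (a ++ c ++ b).
Proof.
move=> Ha Hb Hc.
have Sa := indices_size Ha; have Sb := indices_size Hb; have Sc := indices_size Hc.
have Hx : a ++ b ++ c \in I (sA ++ sB ++ sC) by rewrite !mem_indices_cat ?Ha ?Hb.
rewrite {1}/mxcomp.
transitivity (\sum_(w <- I (sA ++ sC ++ sB)) F z w *
   mxtens (size sA) (size sA) idm (mxsym R (size sB)) w (a ++ b ++ c)).
  by apply: eq_big_seq => w Hw; rewrite comp_idm_l // comp_idm_r.
rewrite sum_cat3.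
have E : forall i j, i \in I sA -> j \in I sC -> {in I sB, forall k,
   F z (i ++ j ++ k) *
   mxtens (size sA) (size sA) idm (mxsym R (size sB)) (i ++ j ++ k) (a ++ b ++ c) =
   idm k b * (idm j c * (idm i a * F z (i ++ j ++ k)))}.
  move=> i j Hi Hj k Hk.
  have Si := indices_size Hi; have Sj := indices_size Hj; have Sk := indices_size Hk.
  rewrite mxtens_cat // sym_cat // idm_cat ?Sj //; ring.
transitivity (\sum_(i <- I sA) \sum_(j <- I sC) idm j c * (idm i a * F z (i ++ j ++ b))).
  apply: eq_big_seq => i Hi; apply: eq_big_seq => j Hj.
  by rewrite (eq_big_seq _ (E i j Hi Hj)) sum_idmR.
transitivity (\sum_(i <- I sA) idm i a * F z (i ++ c ++ b)).
  by apply: eq_big_seq => i Hi; rewrite sum_idmR.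
by rewrite sum_idmR.
Qed.

Lemma mxtens_cat3 nA nB (F G : mx R) y1 y2 y3 x1 x2 x3 :
  (size y1 + size y2)%N = nB -> (size x1 + size x2)%N = nA ->
  mxtens nA nB F G (y1 ++ y2 ++ y3) (x1 ++ x2 ++ x3) = F (y1 ++ y2) (x1 ++ x2) * G y3 x3.
Proof. by move=> H1 H2; rewrite /mxtens !tk3 // !dr3. Qed.

Lemma mxtens_0l3 nB (F G : mx R) y1 y2 y3 x :
  (size y1 + size y2)%N = nB ->
  mxtens 0 nB F G (y1 ++ y2 ++ y3) x = F (y1 ++ y2) [::] * G y3 x.
Proof. by move=> H1; rewrite /mxtens !tk3 // !dr3 // take0 drop0. Qed.

Lemma mxtens_0r3 nA (F G : mx R) y x1 x2 x3 :
  (size x1 + size x2)%N = nA ->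
  mxtens nA 0 F G y (x1 ++ x2 ++ x3) = F [::] (x1 ++ x2) * G y x3.
Proof. by move=> H1; rewrite /mxtens !tk3 // !dr3 // take0 drop0. Qed.

Lemma mslash_eval sA sB sC sD (F G : mx R) a b c d :
  a \in I sA -> b \in I sB -> c \in I sC -> d \in I sD ->
  mxcomp (sB ++ sC ++ sD ++ sD)
    (mxtens (size sB + size sC) (size sB + size sC) idm (eps R sD))
    (mxcomp (sB ++ sC ++ sC ++ sD)
       (mxtens (size sB + size sC) (size sB + size sC) idm
          (mxtens (size sC) (size sD) G idm))
       (mxtens (size sA) (size sB) F
          (mxtens 0 (size sC + size sC) (eta R sC) idm)))
    (b ++ c) (a ++ d) = F b a * G d c.
Proof.
move=> Ha Hb Hc Hd.
have Sa := indices_size Ha; have Sb := indices_size Hb; have Sc := indices_size Hc.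
have Sd := indices_size Hd.
have inner : forall i j k l, i \in I sB -> j \in I sC -> k \in I sD -> l \in I sD ->
  mxcomp (sB ++ sC ++ sC ++ sD)
       (mxtens (size sB + size sC) (size sB + size sC) idm
          (mxtens (size sC) (size sD) G idm))
       (mxtens (size sA) (size sB) F
          (mxtens 0 (size sC + size sC) (eta R sC) idm)) (i ++ j ++ k ++ l) (a ++ d)
  = F i a * G k j * idm l d.
  move=> i j k l Hi Hj Hk Hl.
  have Si := indices_size Hi; have Sj := indices_size Hj; have Sk := indices_size Hk.
  have Sl := indices_size Hl.
  rewrite /mxcomp sum_cat4.
  have E : forall p q r, p \in I sB -> q \in I sC -> r \in I sC -> {in I sD, forall t,
    mxtens (size sB + size sC) (size sB + size sC) idm
          (mxtens (size sC) (size sD) G idm) (i ++ j ++ k ++ l) (p ++ q ++ r ++ t) *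
    mxtens (size sA) (size sB) F
          (mxtens 0 (size sC + size sC) (eta R sC) idm) (p ++ q ++ r ++ t) (a ++ d) =
    idm t d * (idm r q * (idm q j * (idm p i * (F p a * G k r * idm l t))))}.
    move=> p q r Hp Hq Hr t Ht.
    have Sp := indices_size Hp; have Sq := indices_size Hq; have Sr := indices_size Hr.
    have St := indices_size Ht.
    rewrite mxtens_cat3 ?Si ?Sj ?Sp ?Sq // mxtens_cat // idm_cat ?Si ?Sp //.
    rewrite mxtens_cat // mxtens_0l3 ?Sq ?Sr // eta_cat //.
    rewrite (idmC i p) (idmC j q) (idmC q r); ring.
  transitivity (\sum_(p <- I sB) \sum_(q <- I sC) \sum_(r <- I sC)
     idm r q * (idm q j * (idm p i * (F p a * G k r * idm l d)))).
    apply: eq_big_seq => p Hp; apply: eq_big_seq => q Hq; apply: eq_big_seq => r Hr.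
    by rewrite (eq_big_seq _ (E p q r Hp Hq Hr)) sum_idmR.
  transitivity (\sum_(p <- I sB) \sum_(q <- I sC)
     idm q j * (idm p i * (F p a * G k q * idm l d))).
    apply: eq_big_seq => p Hp; apply: eq_big_seq => q Hq.
    by rewrite sum_idmR.
  transitivity (\sum_(p <- I sB) idm p i * (F p a * G k j * idm l d)).
    by apply: eq_big_seq => p Hp; rewrite sum_idmR.
  by rewrite sum_idmR.
rewrite {1}/mxcomp sum_cat4.
have E : forall i j k, i \in I sB -> j \in I sC -> k \in I sD -> {in I sD, forall l,
  mxtens (size sB + size sC) (size sB + size sC) idm (eps R sD) (b ++ c) (i ++ j ++ k ++ l) *
  mxcomp (sB ++ sC ++ sC ++ sD)
       (mxtens (size sB + size sC) (size sB + size sC) idm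
          (mxtens (size sC) (size sD) G idm))
       (mxtens (size sA) (size sB) F
          (mxtens 0 (size sC + size sC) (eta R sC) idm)) (i ++ j ++ k ++ l) (a ++ d) =
  idm l d * (idm k l * (idm j c * (idm i b * (F i a * G k j))))}.
  move=> i j k Hi Hj Hk l Hl.
  have Si := indices_size Hi; have Sj := indices_size Hj; have Sk := indices_size Hk.
  have Sl := indices_size Hl.
  rewrite inner // /mxtens (tkf (_ : size (b ++ c) = _)) ?size_cat ?Sb ?Sc //.
  rewrite (drf (_ : size (b ++ c) = _)) ?size_cat ?Sb ?Sc //.
  rewrite (tk3 _ (_ : (size i + size j)%N = _)) ?Si ?Sj //.
  rewrite (dr3 _ (_ : (size i + size j)%N = _)) ?Si ?Sj //.
  rewrite eps_cat // idm_cat ?Sb ?Si // (idmC b i) (idmC c j); ring.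
transitivity (\sum_(i <- I sB) \sum_(j <- I sC) \sum_(k <- I sD)
   idm k d * (idm j c * (idm i b * (F i a * G k j)))).
  apply: eq_big_seq => i Hi; apply: eq_big_seq => j Hj; apply: eq_big_seq => k Hk.
  by rewrite (eq_big_seq _ (E i j k Hi Hj Hk)) sum_idmR.
transitivity (\sum_(i <- I sB) \sum_(j <- I sC) idm j c * (idm i b * (F i a * G d j))).
  apply: eq_big_seq => i Hi; apply: eq_big_seq => j Hj.
  by rewrite sum_idmR.
transitivity (\sum_(i <- I sB) idm i b * (F i a * G d c)).
  by apply: eq_big_seq => i Hi; rewrite sum_idmR.
by rewrite sum_idmR.
Qed.

Lemma mbslash_eval sA sB sC sD (F G : mx R) a b c d :
  a \in I sA -> b \in I sB -> c \in I sC -> d \in I sD ->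
  mxcomp (sB ++ sB ++ sA ++ sD)
    (mxtens (size sB + size sB) 0 (eps R sB) idm)
    (mxcomp (sB ++ sA ++ sA ++ sD)
       (mxtens (size sB) (size sB) idm (mxtens (size sA) (size sB) F idm))
       (mxtens (size sB) (size sB) idm
          (mxtens 0 (size sA + size sA) (eta R sA) G)))
    (a ++ d) (b ++ c) = F b a * G d c.
Proof.
move=> Ha Hb Hc Hd.
have Sa := indices_size Ha; have Sb := indices_size Hb; have Sc := indices_size Hc.
have Sd := indices_size Hd.
have inner : forall i j k l, i \in I sB -> j \in I sB -> k \in I sA -> l \in I sD ->
  mxcomp (sB ++ sA ++ sA ++ sD)
       (mxtens (size sB) (size sB) idm (mxtens (size sA) (size sB) F idm))
       (mxtens (size sB) (size sB) idm
          (mxtens 0 (size sA + size sA) (eta R sA) G)) (i ++ j ++ k ++ l) (b ++ c)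
  = idm i b * F j k * G l c.
  move=> i j k l Hi Hj Hk Hl.
  have Si := indices_size Hi; have Sj := indices_size Hj; have Sk := indices_size Hk.
  have Sl := indices_size Hl.
  rewrite /mxcomp sum_cat4.
  have E : forall p q r, p \in I sB -> q \in I sA -> r \in I sA -> {in I sD, forall t,
    mxtens (size sB) (size sB) idm (mxtens (size sA) (size sB) F idm)
       (i ++ j ++ k ++ l) (p ++ q ++ r ++ t) *
    mxtens (size sB) (size sB) idm (mxtens 0 (size sA + size sA) (eta R sA) G)
       (p ++ q ++ r ++ t) (b ++ c) =
    idm t l * (idm r k * (idm q r * (idm p i * (idm p b * F j q * G t c))))}.
    move=> p q r Hp Hq Hr t Ht.
    have Sp := indices_size Hp; have Sq := indices_size Hq; have Sr := indices_size Hr.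
    have St := indices_size Ht.
    rewrite !mxtens_cat ?Si ?Sj ?Sp ?Sq ?Sb // idm_cat ?Sk ?Sr //.
    rewrite mxtens_0l3 ?Sq ?Sr // eta_cat //.
    rewrite (idmC i p) (idmC k r) (idmC l t); ring.
  transitivity (\sum_(p <- I sB) \sum_(q <- I sA) \sum_(r <- I sA)
     idm r k * (idm q r * (idm p i * (idm p b * F j q * G l c)))).
    apply: eq_big_seq => p Hp; apply: eq_big_seq => q Hq; apply: eq_big_seq => r Hr.
    by rewrite (eq_big_seq _ (E p q r Hp Hq Hr)) sum_idmR.
  transitivity (\sum_(p <- I sB) \sum_(q <- I sA)
     idm q k * (idm p i * (idm p b * F j q * G l c))).
    apply: eq_big_seq => p Hp; apply: eq_big_seq => q Hq.
    by rewrite sum_idmR.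
  transitivity (\sum_(p <- I sB) idm p i * (idm p b * F j k * G l c)).
    by apply: eq_big_seq => p Hp; rewrite sum_idmR.
  by rewrite sum_idmR.
rewrite {1}/mxcomp sum_cat4.
have E : forall i j k, i \in I sB -> j \in I sB -> k \in I sA -> {in I sD, forall l,
  mxtens (size sB + size sB) 0 (eps R sB) idm (a ++ d) (i ++ j ++ k ++ l) *
  mxcomp (sB ++ sA ++ sA ++ sD)
       (mxtens (size sB) (size sB) idm (mxtens (size sA) (size sB) F idm))
       (mxtens (size sB) (size sB) idm
          (mxtens 0 (size sA + size sA) (eta R sA) G)) (i ++ j ++ k ++ l) (b ++ c) =
  idm l d * (idm k a * (idm j i * (idm i b * (F j k * G l c))))}.
  move=> i j k Hi Hj Hk l Hl.
  have Si := indices_size Hi; have Sj := indices_size Hj; have Sk := indices_size Hk.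
  have Sl := indices_size Hl.
  rewrite inner // mxtens_0r3 ?Si ?Sj // eps_cat // idm_cat ?Sa ?Sk //.
  rewrite (idmC a k) (idmC d l) (idmC i j); ring.
transitivity (\sum_(i <- I sB) \sum_(j <- I sB) \sum_(k <- I sA)
   idm k a * (idm j i * (idm i b * (F j k * G d c)))).
  apply: eq_big_seq => i Hi; apply: eq_big_seq => j Hj; apply: eq_big_seq => k Hk.
  by rewrite (eq_big_seq _ (E i j k Hi Hj Hk)) sum_idmR.
transitivity (\sum_(i <- I sB) \sum_(j <- I sB) idm j i * (idm i b * (F j a * G d c))).
  apply: eq_big_seq => i Hi; apply: eq_big_seq => j Hj.
  by rewrite sum_idmR.
transitivity (\sum_(i <- I sB) idm i b * (F i a * G d c)).
  by apply: eq_big_seq => i Hi; rewrite sum_idmR.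
by rewrite sum_idmR.
Qed.
End Eval.

Local Open Scope ring_scope.

Section Delta.
Variable R : realType.

Lemma delta_perm M N U L y x M' N' y' x' :
  uniq (M ++ N) -> size (M ++ N) = size (x ++ y) -> size (M' ++ N') = size (x' ++ y') ->
  perm_eq (zip (M' ++ N') (x' ++ y')) (zip (M ++ N) (x ++ y)) ->
  delta_map R M' N' U L y' x' = delta_map R M N U L y x.
Proof.
move=> Hu Hs Hs' Hp.
have E : forall k, nth 0%N (x' ++ y') (index k (M' ++ N')) =
                   nth 0%N (x ++ y) (index k (M ++ N)).
  have Hp' : perm_eq (zip (M ++ N) (x ++ y)) (zip (M' ++ N') (x' ++ y')) by rewrite perm_sym.
  by move=> k; exact: (esym (dval_perm Hs Hs' Hu Hp' k)).
by rewrite /delta_map (eq_map E U) (eq_map E L).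
Qed.

Lemma delta_bin Ma Na Ua La Mb Nb Ub Lb xa ya xb yb M' N' x' y' :
  size Ua = size La -> perm_eq (Ma ++ Na) (Ua ++ La) -> perm_eq (Mb ++ Nb) (Ub ++ Lb) ->
  uniq ((Ma ++ Na) ++ (Mb ++ Nb)) -> size (Ma ++ Na) = size (xa ++ ya) ->
  size (Mb ++ Nb) = size (xb ++ yb) -> size (M' ++ N') = size (x' ++ y') ->
  perm_eq (zip (M' ++ N') (x' ++ y'))
          (zip ((Ma ++ Na) ++ (Mb ++ Nb)) ((xa ++ ya) ++ (xb ++ yb))) ->
  delta_map R M' N' (Ua ++ Ub) (La ++ Lb) y' x' =
  delta_map R Ma Na Ua La ya xa * delta_map R Mb Nb Ub Lb yb xb.
Proof.
move=> HUL Hpa Hpb Hu Hsa Hsb Hs' Hp.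
have Hs : size ((Ma ++ Na) ++ (Mb ++ Nb)) = size ((xa ++ ya) ++ (xb ++ yb)).
  by rewrite size_cat Hsa Hsb -size_cat.
have Hp' : perm_eq (zip ((Ma ++ Na) ++ (Mb ++ Nb)) ((xa ++ ya) ++ (xb ++ yb)))
   (zip (M' ++ N') (x' ++ y')) by rewrite perm_sym.
have E : forall k, nth 0%N (x' ++ y') (index k (M' ++ N')) =
    dval ((Ma ++ Na) ++ (Mb ++ Nb)) ((xa ++ ya) ++ (xb ++ yb)) k.
  by move=> k; exact: (esym (dval_perm Hs Hs' Hu Hp' k)).
move: Hu; rewrite cat_uniq => /and3P[_ Hdis _].
have Ea : forall k, k \in Ua ++ La ->
    dval ((Ma ++ Na) ++ (Mb ++ Nb)) ((xa ++ ya) ++ (xb ++ yb)) k =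
    nth 0%N (xa ++ ya) (index k (Ma ++ Na)).
  by move=> k Hk; rewrite dval_catl // (perm_mem Hpa).
have Eb : forall k, k \in Ub ++ Lb ->
    dval ((Ma ++ Na) ++ (Mb ++ Nb)) ((xa ++ ya) ++ (xb ++ yb)) k =
    nth 0%N (xb ++ yb) (index k (Mb ++ Nb)).
  move=> k Hk; rewrite dval_catr //.
  apply/negP => Hka; move/hasPn: Hdis => /(_ k); rewrite (perm_mem Hpb) Hk Hka.
  by move/(_ isT).
rewrite /delta_map (eq_map E (Ua ++ Ub)) (eq_map E (La ++ Lb)) !map_cat.
rewrite eqseq_cat ?size_map //.
set K := (Ma ++ Na) ++ (Mb ++ Nb); set V := (xa ++ ya) ++ (xb ++ yb).
have -> : map (fun k => dval K V k) Ua =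
          map (fun k => nth 0%N (xa ++ ya) (index k (Ma ++ Na))) Ua.
  by apply/eq_in_map => k Hk; apply: Ea; rewrite mem_cat Hk.
have -> : map (fun k => dval K V k) La =
          map (fun k => nth 0%N (xa ++ ya) (index k (Ma ++ Na))) La.
  by apply/eq_in_map => k Hk; apply: Ea; rewrite mem_cat Hk orbT.
have -> : map (fun k => dval K V k) Ub =
          map (fun k => nth 0%N (xb ++ yb) (index k (Mb ++ Nb))) Ub.
  by apply/eq_in_map => k Hk; apply: Eb; rewrite mem_cat Hk.
have -> : map (fun k => dval K V k) Lb =
          map (fun k => nth 0%N (xb ++ yb) (index k (Mb ++ Nb))) Lb.
  by apply/eq_in_map => k Hk; apply: Eb; rewrite mem_cat Hk orbT.
by rewrite -natrM mulnb.
Qed.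

Lemma map_dval_self (K V : seq nat) : uniq K -> size K = size V ->
  map (fun k => nth 0%N V (index k K)) K = V.
Proof.
move=> Hu Hs; apply: (@eq_from_nth _ 0%N); first by rewrite size_map.
move=> i; rewrite size_map => Hi.
by rewrite (nth_map 0%N) // index_uniq.
Qed.

Lemma delta_ax n r y x : size x = r -> size y = r ->
  delta_map R (iota n r) (iota (n + r) r) (iota n r) (iota (n + r) r) y x = idm R y x.
Proof.
move=> Hx Hy; rewrite /delta_map /Defs.idm eq_sym.
have Hdis : forall k, k \in iota (n + r) r -> k \notin iota n r.
  by move=> k; rewrite !mem_iota => /andP[H1 H2]; apply/negP => /andP[H3 H4]; lia.
have -> : map (fun k => nth 0%N (x ++ y) (index k (iota n r ++ iota (n + r) r))) (iota n r)
   = map (fun k => nth 0%N x (index k (iota n r))) (iota n r).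
  by apply/eq_in_map => k Hk; rewrite -/(dval _ _ k) dval_catl ?size_iota.
have -> : map (fun k => nth 0%N (x ++ y) (index k (iota n r ++ iota (n + r) r))) (iota (n + r) r)
   = map (fun k => nth 0%N y (index k (iota (n + r) r))) (iota (n + r) r).
  by apply/eq_in_map => k Hk; rewrite -/(dval _ _ k) dval_catr ?size_iota ?Hdis.
by rewrite !map_dval_self ?iota_uniq ?size_iota.
Qed.
End Delta.

Local Open Scope ring_scope.

Ltac clean := repeat match goal with H : ?T |- _ =>
  lazymatch T with @eq nat _ _ => fail | _ => clear H end end.
Ltac ptac := apply/permP => ?; rewrite !count_cat; clean; lia.
Ltac ztac := rewrite /= ?zip_cat ?size_cat; try (clean; rlia); ptac.
Ltac szt := rewrite /= ?size_cat; clean; rlia.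

Lemma mem_sz atom (d : atom -> nat) (A : fml atom) x :
  x \in indices (sh d A) -> size x = rk A.
Proof. by move/indices_size; rewrite size_sh. Qed.

Lemma ainv_uniq2 a b n r1 r2 r3 r4 : ainv a n r1 r2 -> ainv b (ann_nxt a) r3 r4 ->
  uniq ((ann_src a ++ ann_tgt a) ++ (ann_src b ++ ann_tgt b)).
Proof.
case=> _ _ _ _ Hu _ Ha [_ _ _ _ Hu2 _ Ha2].
rewrite cat_uniq Hu Hu2 /= andbT.
apply/hasPn => x /= Hx; apply/negP => Hx2.
move/allP: Ha => /(_ x Hx2) /andP[_]; move/allP: Ha2 => /(_ x Hx) /andP[].
lia.
Qed.

Lemma main (R : realType) atom (d : atom -> nat) (X Y : fml atom) (f : nld X Y) n y x :
  y \in indices (sh d Y) -> x \in indices (sh d X) ->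
  interp R d f y x = delta_map R (ann_src (annot f n)) (ann_tgt (annot f n))
                                 (ann_up (annot f n)) (ann_lo (annot f n)) y x.
Proof.
elim: f n y x => /=
  [A|A B f IH|A B C f IH|A B C f IH|A B f IH|A B C f IH|A B C f IH
  |A B f IH|A B f IH|A B C D f IH g IH2|A B C D f IH g IH2|A B C D f IH g IH2
  |A B C D f IH|A B C D f IH|A B C D f IH|A B C D f IH] n y x Hy Hx.
- by rewrite delta_ax // (mem_sz Hx, mem_sz Hy).
- exact: IH.
-
  move: (IH n) (annot_inv f n); case: (annot f n) => s t u l m IHf [/= Hs Ht Hul Hp Hu _ _].
  case: (seq_split Hs) => P [Q [Es HP HQ]]; subst s.
  rewrite (tk _ HP) (dr _ HP).
  case: (indices_catP Hy) => c [b [-> Hc Hb]].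
  have Sx := mem_sz Hx; have Sc := mem_sz Hc; have Sb := mem_sz Hb.
  have := rres_eval (interp R d f) Hx Hb Hc; rewrite !size_sh => ->.
  rewrite IHf //; last by rewrite mem_indices_cat ?Hx ?Hb // (indices_size Hx).
  symmetry; apply: delta_perm => //; [szt|szt|ztac].

-
  move: (IH n) (annot_inv f n); case: (annot f n) => s t u l m IHf [/= Hs Ht Hul Hp Hu _ _].
  case: (seq_split Hs) => P [Q [Es HP HQ]]; subst s.
  rewrite (tk _ HP) (dr _ HP).
  case: (indices_catP Hy) => a [c [-> Ha Hc]].
  have Sx := mem_sz Hx; have Sc := mem_sz Hc; have Sa := mem_sz Ha.
  have := lres_eval (interp R d f) Ha Hx Hc; rewrite !size_sh => ->.
  rewrite IHf //; last by rewrite mem_indices_cat ?Hx ?Ha // (indices_size Ha).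
  symmetry; apply: delta_perm => //; [szt|szt|ztac].
- exact: IH.
-
  move: (IH n) (annot_inv f n); case: (annot f n) => s t u l m IHf [/= Hs Ht Hul Hp Hu _ _].
  case: (seq_split Ht) => P [Q [Es HP HQ]]; subst t.
  rewrite (tk _ HP) (dr _ HP).
  case: (indices_catP Hx) => a [b [-> Ha Hb]].
  have Sy := mem_sz Hy; have Sb := mem_sz Hb; have Sa := mem_sz Ha.
  have := rres_inv_eval (interp R d f) Ha Hb Hy; rewrite !size_sh => ->.
  rewrite IHf //; last by rewrite mem_indices_cat ?Hy ?Hb // (indices_size Hy).
  symmetry; apply: delta_perm => //; [szt|szt|ztac].
-
  move: (IH n) (annot_inv f n); case: (annot f n) => s t u l m IHf [/= Hs Ht Hul Hp Hu _ _].
  case: (seq_split Ht) => P [Q [Es HP HQ]]; subst t.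
  rewrite (tk _ HP) (dr _ HP).
  case: (indices_catP Hx) => a [b [-> Ha Hb]].
  have Sy := mem_sz Hy; have Sb := mem_sz Hb; have Sa := mem_sz Ha.
  have := lres_inv_eval (interp R d f) Ha Hb Hy; rewrite !size_sh => ->.
  rewrite IHf //; last by rewrite mem_indices_cat ?Hy ?Ha // (indices_size Ha).
  symmetry; apply: delta_perm => //; [szt|szt|ztac].
- exact: IH.
- exact: IH.
-
  move: (IH n) (annot_inv f n); case: (annot f n) => s t u l m IHf Hinv.
  move: (IH2 m) (annot_inv g m); case: (annot g m) => s2 t2 u2 l2 m2 IHg Hinv2.
  have Hu := ainv_uniq2 Hinv Hinv2.
  case: Hinv => /= Hs Ht Hul Hp _ _ _; case: Hinv2 => /= Hs2 Ht2 Hul2 Hp2 _ _ _.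
  case: (indices_catP Hy) => b [e [-> Hb He]].
  case: (indices_catP Hx) => a [c [-> Ha Hc]].
  have Sa := mem_sz Ha; have Sb := mem_sz Hb; have Sc := mem_sz Hc; have Se := mem_sz He.
  rewrite mxtens_cat // IHf // IHg //.
  symmetry; rewrite (@delta_bin R s t u l s2 t2 u2 l2 a b c e) //; [szt|szt|szt|ztac].
-
  move: (IH n) (annot_inv f n); case: (annot f n) => s t u l m IHf Hinv.
  move: (IH2 m) (annot_inv g m); case: (annot g m) => s2 t2 u2 l2 m2 IHg Hinv2.
  have Hu := ainv_uniq2 Hinv Hinv2.
  case: Hinv => /= Hs Ht Hul Hp _ _ _; case: Hinv2 => /= Hs2 Ht2 Hul2 Hp2 _ _ _.
  case: (indices_catP Hy) => b [c [-> Hb Hc]].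
  case: (indices_catP Hx) => a [e [-> Ha He]].
  have Sa := mem_sz Ha; have Sb := mem_sz Hb; have Sc := mem_sz Hc; have Se := mem_sz He.
  have := mslash_eval (interp R d f) (interp R d g) Ha Hb Hc He; rewrite !size_sh => ->.
  rewrite IHf // IHg //.
  symmetry; rewrite (@delta_bin R s t u l s2 t2 u2 l2 a b c e) //; [szt|szt|szt|ztac].
-
  move: (IH n) (annot_inv f n); case: (annot f n) => s t u l m IHf Hinv.
  move: (IH2 m) (annot_inv g m); case: (annot g m) => s2 t2 u2 l2 m2 IHg Hinv2.
  have Hu := ainv_uniq2 Hinv Hinv2.
  case: Hinv => /= Hs Ht Hul Hp _ _ _; case: Hinv2 => /= Hs2 Ht2 Hul2 Hp2 _ _ _.
  case: (indices_catP Hy) => a [e [-> Ha He]].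
  case: (indices_catP Hx) => b [c [-> Hb Hc]].
  have Sa := mem_sz Ha; have Sb := mem_sz Hb; have Sc := mem_sz Hc; have Se := mem_sz He.
  have := mbslash_eval (interp R d f) (interp R d g) Ha Hb Hc He; rewrite !size_sh => ->.
  rewrite IHf // IHg //.
  symmetry; rewrite (@delta_bin R s t u l s2 t2 u2 l2 a b c e) //; [szt|szt|szt|ztac].
-
  rewrite /mxalpha comp_idm_r // (IH n) //; by rewrite -catA.
-
  move: (IH n) (annot_inv f n); case: (annot f n) => s t u l m IHf [/= Hs Ht Hul Hp Hu _ _].
  case: (seq_split Hs) => Mb [Q [Es HP HQ]]; subst s.
  case: (seq_split HQ) => Ma [Mc [Es Ha Hc]]; subst Q.
  have E : drop (rk B + rk A) (Mb ++ Ma ++ Mc) = Mc.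
    by rewrite catA drop_size_cat // size_cat HP Ha.
  rewrite E (@drop_size_cat _ _ _ _ HP) (@take_size_cat _ _ _ _ Ha) (@take_size_cat _ _ _ _ HP).
  case: (indices_catP Hx) => a [x' [-> Hxa Hx']].
  case: (indices_catP Hx') => b [c [-> Hxb Hxc]].
  have Sa := mem_sz Hxa; have Sb := mem_sz Hxb; have Sc := mem_sz Hxc; have Sy := mem_sz Hy.
  have := sigma_l_eval (interp R d f) y Hxa Hxb Hxc; rewrite !size_sh => ->.
  rewrite IHf //; last by rewrite !mem_indices_cat ?Hxa ?Hxb ?Hxc ?(indices_size Hxa) ?(indices_size Hxb).
  symmetry; apply: delta_perm => //; [szt|szt|ztac].
-
  rewrite /mxalpha_inv comp_idm_r ?(IH n) //; by rewrite catA.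
-
  move: (IH n) (annot_inv f n); case: (annot f n) => s t u l m IHf [/= Hs Ht Hul Hp Hu _ _].
  case: (seq_split Hs) => P [Mb [Es HP HQ]]; subst s.
  case: (seq_split HP) => Ma [Mc [Es Ha Hc]]; subst P.
  rewrite -[(Ma ++ Mc) ++ Mb]catA in Hu Hp IHf *.
  have E : drop (rk A + rk C) (Ma ++ Mc ++ Mb) = Mb.
    by rewrite catA drop_size_cat // size_cat Ha Hc.
  rewrite E (@take_size_cat _ _ _ _ Ha) (@drop_size_cat _ _ _ _ Ha) (@take_size_cat _ _ _ _ Hc).
  rewrite -catA in Hx.
  case: (indices_catP Hx) => a [x' [-> Hxa Hx']].
  case: (indices_catP Hx') => b [c [-> Hxb Hxc]].
  have Sa := mem_sz Hxa; have Sb := mem_sz Hxb; have Sc := mem_sz Hxc; have Sy := mem_sz Hy.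
  have := sigma_r_eval (interp R d f) y Hxa Hxb Hxc; rewrite !size_sh => ->.
  rewrite IHf //; last by rewrite -catA !mem_indices_cat ?Hxa ?Hxb ?Hxc ?(indices_size Hxa) ?(indices_size Hxc).
  symmetry; apply: delta_perm => //; [szt|szt|ztac].
Qed.

Theorem mainTheorem1 (R : realType) (atom : Type) (d : atom -> nat)
    (A B : fml atom) (f : nld A B) :
  mx_eq (sh d A) (sh d B) (interp R d f) (Gmap R f).
Proof. by move=> y x Hy Hx; exact: (main R f 0 Hy Hx). Qed.
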